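(* Let $T\in\mathbb{T}$ have a positive weight on each edge, with adjacency matrix $A$. Then the smallest positive eigenvalue $\tau(T)$ of $A$ is simple, and there exists an eigenvector of $A$ corresponding to $\tau(T)$ all of whose entries are nonzero.
   Context: $\mathbb{T}$ is the class of simple undirected weighted trees $T$ such that (i) $T$ has at least one non-pendant vertex, and (ii) every non-pendant vertex of $T$ is adjacent to at least one pendant vertex (a vertex of degree one). The adjacency matrix $A$ has $(i,j)$ entry equal to the weight of edge $v_iv_j$, or $0$ if no edge. *)

(* Defs.v *)
From mathcomp Require Import all_boot all_order all_algebra.
Set Implicit Arguments. Unset Strict Implicit. Unset Printing Implicit Defensive.
Import Order.TTheory GRing.Theory Num.Theory.
Local Open Scope ring_scope.

Definition simple_graph n (e : rel 'I_n) : Prop :=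
  symmetric e /\ irreflexive e.

Definition deg n (e : rel 'I_n) (v : 'I_n) : nat := #|[set u | e v u]|.

Definition pendant n (e : rel 'I_n) (v : 'I_n) : bool := deg e v == 1%N.

Definition connected_graph n (e : rel 'I_n) : Prop :=
  forall u v : 'I_n, connect e u v.

Definition acyclic_graph n (e : rel 'I_n) : Prop :=
  forall c : seq 'I_n, (3 <= size c)%N -> uniq c -> ~~ cycle e c.

Definition is_tree n (e : rel 'I_n) : Prop :=
  [/\ simple_graph e, connected_graph e & acyclic_graph e].

Definition in_class_T n (e : rel 'I_n) : Prop :=
  [/\ is_tree e,
      (exists v : 'I_n, ~~ pendant e v) &
      (forall v : 'I_n, ~~ pendant e v -> exists u : 'I_n, e v u && pendant e u)].

Definition wadj (R : nzRingType) n (e : rel 'I_n) (w : 'I_n -> 'I_n -> R)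
  : 'M[R]_n := \matrix_(i, j) (if e i j then w i j else 0).

(* Main.v *)
Require Import Defs.
From mathcomp Require Import all_boot all_order all_algebra.
From mathcomp Require Import complex.
From mathcomp Require Import ring lra zify.
Set Implicit Arguments. Unset Strict Implicit. Unset Printing Implicit Defensive.
Import Order.TTheory GRing.Theory Num.Theory.
Local Open Scope ring_scope.

Lemma rank_diag (F : fieldType) m (d : 'rV[F]_m) :
  \rank (diag_mx d) = (\sum_i (d ord0 i != 0%R : nat))%N.
Proof.
elim: m d => [|m IH] d; first by rewrite big_ord0 thinmx0 mxrank0.
rewrite big_ord_recl.
pose d' : 'rV_(1 + m) := d.
have -> : \rank (diag_mx d) = \rank (block_mx (diag_mx (lsubmx d')) 0 0 (diag_mx (rsubmx d'))).
  by rewrite -diag_mx_row hsubmxK.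
rewrite rank_diag_block_mx IH; congr (_ + _)%N.
  rewrite rank_rV; congr (nat_of_bool _).
  have E : lsubmx d' ord0 ord0 = d ord0 ord0.
    by rewrite mxE; congr (d _ _); apply/val_inj.
  have -> : diag_mx (lsubmx d') = (d ord0 ord0)%:M.
    apply/matrixP => i j; rewrite !ord1 !mxE eqxx /=; congr (_ *+ 1); congr (d _ _); exact/val_inj.

  apply/idP/idP; apply: contraNneq => H.
    by rewrite H; apply/eqP/matrixP => i j; rewrite !mxE mul0rn.
  have := congr1 (fun M : 'M_1 => M ord0 ord0) H; by rewrite !mxE eqxx /= mulr1n => ->.
apply: eq_bigr => i _; rewrite mxE.
by congr (nat_of_bool (d _ _ != 0%R)); apply/val_inj.
Qed.

Lemma char_poly_conj (F : comUnitRingType) m (P M : 'M[F]_m) : P \in unitmx ->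
  char_poly (invmx P *m M *m P) = char_poly M.
Proof.
move=> Pu; rewrite /char_poly.
have -> : char_poly_mx (invmx P *m M *m P) =
  map_mx polyC (invmx P) *m char_poly_mx M *m map_mx polyC P.
  rewrite /char_poly_mx !map_mxM mulmxBr mulmxBl; congr (_ - _).
  by rewrite scalar_mxC -mulmxA -map_mxM mulVmx // map_mx1 mulmx1.
rewrite !det_mulmx mulrC mulrA -det_mulmx -map_mxM mulmxV // map_mx1 det1 mul1r //.
Qed.

Lemma mxrank_mulUl (F : fieldType) m k (U : 'M[F]_m) (X : 'M[F]_(m, k)) :
  U \in unitmx -> \rank (U *m X) = \rank X.
Proof.
move=> Uu; apply/eqP; rewrite eqn_leq mxrankM_maxr /=.
by rewrite -{1}(mulKmx Uu X) mxrankM_maxr.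
Qed.

Section S.
Variable R : rcfType.
Local Notation f := (real_complex R).

Lemma Creal_eq (x : R[i]) : x \is Num.real -> x = f (complex.Re x).
Proof.
case: x => a b; rewrite realE => /orP[H|H].
  by have := ger0_Im H => /= ->.
have : 0 <= - (a +i* b)%C by rewrite oppr_ge0.
by move/ger0_Im => /= /eqP; rewrite oppr_eq0 => /eqP ->.
Qed.

Lemma f_real (x : R) : f x \is Num.real.
Proof.
by rewrite realE ler0c -oppr_ge0 -rmorphN ler0c oppr_ge0 -realE num_real.
Qed.

Variable n : nat.
Variable A : 'M[R]_n.
Hypothesis Asym : A^T = A.

Lemma real_spectral : exists rd : 'I_n -> R,
  char_poly A = \prod_i ('X - (rd i)%:P) /\
  forall c, \rank (A - c%:M) = (\sum_i (rd i != c : nat))%N.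
Proof.
pose AC := map_mx f A.
have AH : AC \is hermsymmx.
  apply: realsym_hermsym.
    apply/is_hermitianmxP; rewrite expr0 scale1r map_mx_id // /AC map_trmx Asym //.
  by apply/mxOverP => i j; rewrite mxE f_real.
have /orthomx_spectralP AE := hermitian_normalmx AH.
have Dreal := hermitian_spectral_diag_real AH.
set P := spectralmx AC in AE; set D := spectral_diag AC in AE Dreal.
have Pu : P \in unitmx by exact: spectral_unit.
pose rd i := complex.Re (D ord0 i).
have Drd i : D ord0 i = f (rd i).
  by apply: Creal_eq; apply: (mxOverP Dreal).
exists rd; split.
  apply: (@map_poly_inj _ _ f).
  rewrite map_char_poly -/AC AE char_poly_conj // char_poly_trig ?diag_mx_is_trig //.
  rewrite rmorph_prod; apply: eq_bigr => i _.
  by rewrite mxE eqxx mulr1n Drd rmorphB /= map_polyX map_polyC.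
move=> c.
rewrite -(mxrank_map f) map_mxB map_scalar_mx -/AC AE.
have -> : (f c)%:M = invmx P *m (f c)%:M *m P :> 'M_n.
  by rewrite scalar_mxC -mulmxA mulVmx // mulmx1.
rewrite -mulmxBl mxrankMfree ?row_free_unit // -mulmxBr mxrank_mulUl ?unitmx_inv //.
rewrite -diag_const_mx -linearB /= rank_diag; apply: eq_bigr => i _.
rewrite !mxE Drd; congr (~~ _); apply/eqP/eqP => [|->]; last by rewrite subrr.
by move/eqP; rewrite subr_eq0 => /eqP [].
Qed.
End S.

Definition bf (R : nzRingType) n (M : 'M[R]_n) (u v : 'rV[R]_n) : R :=
  (u *m M *m v^T) ord0 ord0.

Section Forms.
Variable (R : realFieldType) (n : nat).
Implicit Types (M : 'M[R]_n) (u v w : 'rV[R]_n).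

Lemma bfDl M u v w : bf M (u + v) w = bf M u w + bf M v w.
Proof. by rewrite /bf !mulmxDl mxE. Qed.
Lemma bfDr M u v w : bf M w (u + v) = bf M w u + bf M w v.
Proof. by rewrite /bf linearD /= mulmxDr mxE. Qed.
Lemma bfZl M a u w : bf M (a *: u) w = a * bf M u w.
Proof. by rewrite /bf -!scalemxAl mxE. Qed.
Lemma bfZr M a u w : bf M w (a *: u) = a * bf M w u.
Proof. by rewrite /bf linearZ /= -scalemxAr mxE. Qed.
Lemma bfNl M u w : bf M (- u) w = - bf M u w.
Proof. by rewrite -scaleN1r bfZl mulN1r. Qed.
Lemma bfNr M u w : bf M w (- u) = - bf M w u.
Proof. by rewrite -scaleN1r bfZr mulN1r. Qed.
Lemma bfBl M u v w : bf M (u - v) w = bf M u w - bf M v w.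
Proof. by rewrite bfDl bfNl. Qed.
Lemma bfBr M u v w : bf M w (u - v) = bf M w u - bf M w v.
Proof. by rewrite bfDr bfNr. Qed.
Lemma bf_suml M I (r : seq I) (P : pred I) (F : I -> 'rV[R]_n) w :
  bf M (\sum_(i <- r | P i) F i) w = \sum_(i <- r | P i) bf M (F i) w.
Proof. by rewrite /bf !mulmx_suml summxE. Qed.
Lemma bf_sumr M I (r : seq I) (P : pred I) (F : I -> 'rV[R]_n) w :
  bf M w (\sum_(i <- r | P i) F i) = \sum_(i <- r | P i) bf M w (F i).
Proof.
rewrite /bf (linear_sum (@trmx R 1 n)) mulmx_sumr summxE //.
Qed.
Lemma bfE M u v : bf M u v = \sum_i \sum_j u ord0 i * M i j * v ord0 j.
Proof.
rewrite /bf mxE [RHS]exchange_big; apply: eq_bigr => j _; rewrite !mxE mulr_suml.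
by apply: eq_bigr => i _.
Qed.
Lemma bf_sym M u v : M^T = M -> bf M u v = bf M v u.
Proof.
move=> sM; rewrite /bf.
have -> : (u *m M *m v^T) ord0 ord0 = ((u *m M *m v^T)^T) ord0 ord0 by rewrite [RHS]mxE.
by rewrite !trmx_mul trmxK sM mulmxA.
Qed.
Lemma bfBM M c u v : bf (M - c%:M) u v = bf M u v - c * bf 1%:M u v.
Proof.
by rewrite /bf mulmxBr mulmxBl mul_mx_scalar -scalemxAl !mxE mulmx1.
Qed.
Lemma dot_ge0 u : 0 <= bf 1%:M u u.
Proof.
rewrite /bf mulmx1 mxE sumr_ge0 // => i _; rewrite mxE -expr2 sqr_ge0 //.
Qed.
Lemma dot_eq0 u : (bf 1%:M u u == 0) = (u == 0).
Proof.
apply/idP/idP => [|/eqP->]; last by rewrite /bf mul0mx mul0mx mxE.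
rewrite /bf mulmx1 mxE psumr_eq0 => [H|i _]; last by rewrite mxE -expr2 sqr_ge0.
apply/eqP/matrixP => i j; rewrite ord1 mxE.
have /allP /(_ j) := H; rewrite mem_index_enum mxE -expr2 sqrf_eq0 => /(_ isT)/eqP //.
Qed.
Lemma dot_gt0 u : u != 0 -> 0 < bf 1%:M u u.
Proof. by move=> uz; rewrite lt_def dot_eq0 uz dot_ge0. Qed.
End Forms.

Section Spec.
Variables (R : rcfType) (n : nat) (A : 'M[R]_n) (rd : 'I_n -> R).
Hypotheses (Asym : A^T = A)
  (Hchar : char_poly A = \prod_i ('X - (rd i)%:P))
  (Hrank : forall c, \rank (A - c%:M) = (\sum_i (rd i != c : nat))%N).

Lemma rank_eigen c : \rank (eigenspace A c) = (\sum_i (rd i == c : nat))%N.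
Proof.
rewrite /eigenspace mxrank_ker Hrank.
have : (\sum_i (rd i != c : nat) + \sum_i (rd i == c : nat))%N = n.
  rewrite -big_split /= (eq_bigr (fun _ => 1%N)) ?sum_nat_const ?card_ord ?muln1 // => i _.
  by case: (rd i == c).
move=> E; rewrite -{1}E; exact: addKn.
Qed.

Lemma eigenvalue_rd c : eigenvalue A c = [exists i, rd i == c].
Proof.
rewrite /eigenvalue -mxrank_eq0 rank_eigen sum_nat_eq0.
apply/forallPn/existsP => -[i Hi]; exists i; move: Hi; by case: (rd i == c).
Qed.

Lemma mup_rd c : mup c (char_poly A) = (\sum_i (rd i == c : nat))%N.
Proof.
rewrite Hchar -(big_map rd predT (fun y => 'X - y%:P)) mu_prod_XsubC.
rewrite -sum1_count big_map big_mkcond /=; apply: eq_bigr => i _.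
by rewrite eq_sym; case: (rd i == c).
Qed.

Definition cs := undup [seq rd i | i <- enum 'I_n].
Definition Esp (j : 'I_(size cs)) := eigenspace A (nth 0 cs j).

Lemma cs_inj : {in predT &, injective (fun j : 'I_(size cs) => nth 0 cs j)}.
Proof.
move=> j1 j2 _ _ /eqP; rewrite nth_uniq ?undup_uniq // => /eqP; exact: val_inj.
Qed.

Lemma rank_Esp_full : \rank (\sum_j Esp j) = n.
Proof.
have dir := mxdirect_sum_eigenspace A cs_inj.
move: dir; rewrite mxdirectE /= => /eqP ->.
rewrite /Esp; under eq_bigr do rewrite rank_eigen.
rewrite exchange_big /=.
rewrite -[RHS]muln1 -[X in (X * 1)%N]card_ord -sum_nat_const; apply: eq_bigr => i _.
have : rd i \in cs by rewrite mem_undup map_f // mem_enum.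
rewrite -index_mem => Hi.
rewrite (bigD1 (Ordinal Hi)) //= nth_index ?eqxx; last by rewrite -index_mem.
rewrite big1 // => j /eqP Hj; apply/eqP; rewrite eqb0; apply/eqP => E.
apply: Hj; apply: val_inj => /=; rewrite E index_uniq ?undup_uniq //.
Qed.

Lemma cs_rd (j : 'I_(size cs)) : exists i, nth 0 cs j = rd i.
Proof.
have : nth 0 cs j \in cs by exact: (mem_nth 0 (ltn_ord j)).
by rewrite mem_undup => /mapP [i _ ->]; exists i.
Qed.

Lemma bf_eig a u v : u *m A = a *: u -> bf A u v = a * bf 1%:M u v.
Proof. by move=> H; rewrite /bf H -scalemxAl mulmx1 mxE. Qed.

Lemma eigen_orth a b u v : a != b -> (u <= eigenspace A a)%MS ->
  (v <= eigenspace A b)%MS -> bf 1%:M u v = 0.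
Proof.
move=> ab /eigenspaceP Hu /eigenspaceP Hv.
have : bf A u v = a * bf 1%:M u v by rewrite /bf Hu -scalemxAl mulmx1 mxE.
rewrite bf_sym // (bf_sym _ _ (trmx1 _ _)).
have -> : bf A v u = b * bf 1%:M v u by rewrite /bf Hv -scalemxAl mulmx1 mxE.
move/eqP; rewrite -subr_eq0 -mulrBl mulf_eq0 subr_eq0 eq_sym (negbTE ab) /=.
by move/eqP.
Qed.

Lemma form_sum (Q : pred 'I_(size cs)) c z :
  (z <= \sum_(j | Q j) Esp j)%MS ->
  exists zs : 'I_(size cs) -> 'rV[R]_n,
    bf (A - c%:M) z z = \sum_(j | Q j) (nth 0 cs j - c) * bf 1%:M (zs j) (zs j).
Proof.
move=> /sub_sumsmxP [u_ ->]; exists (fun j => u_ j *m Esp j).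
rewrite bf_suml; apply: eq_bigr => j Qj; rewrite bf_sumr.
have Hj : (u_ j *m Esp j) *m A = nth 0 cs j *: (u_ j *m Esp j).
  by apply/eigenspaceP; apply: submxMl.
rewrite (bigD1 j) //= big1 ?addr0 => [|j' /andP [_ jj']].
  by rewrite bfBM (bf_eig _ Hj) mulrBl.
rewrite bfBM (bf_eig _ Hj) (@eigen_orth (nth 0 cs j) (nth 0 cs j')).
- by rewrite mulr0 mulr0 subr0.
- by rewrite (inj_in_eq cs_inj) // eq_sym.
- exact: submxMl.
- exact: submxMl.
Qed.

Lemma sub_full (z : 'rV[R]_n) : (z <= \sum_j Esp j)%MS.
Proof.
apply: submx_trans (submx1 z) _.
have := mxrank_leqif_sup (submx1 (\sum_j Esp j)%MS).
by rewrite rank_Esp_full mxrank1 => /leqif_refl.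
Qed.

Lemma form_sign (Q : pred 'I_(size cs)) c (z : 'rV[R]_n) (s : bool) :
  (forall j, Q j -> if s then 0 <= nth 0 cs j - c else nth 0 cs j - c <= 0) ->
  (z <= \sum_(j | Q j) Esp j)%MS ->
  if s then 0 <= bf (A - c%:M) z z else bf (A - c%:M) z z <= 0.
Proof.
move=> HQ /(form_sum c) [zs ->]; case: s HQ => HQ.
  by apply: sumr_ge0 => j Qj; apply: mulr_ge0; [exact: HQ | exact: dot_ge0].
by apply: sumr_le0 => j Qj; apply: mulr_le0_ge0; [exact: HQ | exact: dot_ge0].
Qed.

Lemma cap0_rank (U E : 'M[R]_n) :
  (forall z : 'rV[R]_n, (z <= U :&: E)%MS -> z = 0) -> (\rank U + \rank E <= n)%N.
Proof.
move=> H; have /eqP E0 : (U :&: E)%MS == 0 by apply/rowV0P.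
by rewrite -mxrank_sum_cap E0 mxrank0 addn0 rank_leq_col.
Qed.

Lemma dim_bound (tau : R) (U V : 'M[R]_n) :
  (forall j : 'I_(size cs), ~~ ((0 < nth 0 cs j) && (nth 0 cs j < tau))) ->
  (forall z, (z <= U)%MS -> z != 0 -> bf (A - tau%:M) z z < 0) ->
  (forall z, (z <= V)%MS -> z != 0 -> 0 < bf A z z) ->
  (\rank U + \rank V <= n)%N.
Proof.
move=> Hgap HU HV.
pose Elow := (\sum_(j : 'I_(size cs) | (nth 0 cs j < tau)%R) Esp j)%MS.
pose Ehigh := (\sum_(j : 'I_(size cs) | ~~ (nth 0 cs j < tau)%R) Esp j)%MS.
have Hfull : (n <= \rank Elow + \rank Ehigh)%N.
  rewrite -{1}rank_Esp_full (bigID (fun j : 'I_(size cs) => (nth 0 cs j < tau)%R)) /=.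
  exact: mxrank_adds_leqif.
have H1 : (\rank U + \rank Ehigh <= n)%N.
  apply: cap0_rank => z; rewrite sub_capmx => /andP [zU zE].
  apply/eqP; apply: contraT => z0.
  have := HU z zU z0; rewrite ltNge.
  have -> // := @form_sign _ tau z true _ zE.
  by move=> j /= Hj; rewrite subr_ge0 leNgt.
have H2 : (\rank V + \rank Elow <= n)%N.
  apply: cap0_rank => z; rewrite sub_capmx => /andP [zV zE].
  apply/eqP; apply: contraT => z0.
  have := HV z zV z0; rewrite ltNge.
  have := @form_sign _ 0 z false _ zE.
  rewrite bfBM mul0r subr0 => -> //.
  move=> j /= Hj; rewrite subr0; have := Hgap j; rewrite Hj andbT -leNgt //.
have : (\rank U + \rank V + n <= n + n)%N.
  apply: leq_trans (leq_add H1 H2).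
  by rewrite addnACA leq_add2l [(_ + \rank Elow)%N]addnC.
by rewrite leq_add2r.
Qed.

Lemma ex_pos (V : 'M[R]_n) :
  (forall z, (z <= V)%MS -> z != 0 -> 0 < bf A z z) -> V != 0 ->
  exists j : 'I_(size cs), 0 < nth 0 cs j.
Proof.
move=> HV /rowV0Pn [z zV z0].
apply/existsP; apply: contraT => /existsPn Hn.
have := HV z zV z0; rewrite ltNge.
have := @form_sign predT 0 z false _ (sub_full z).
rewrite bfBM mul0r subr0 => -> //.
by move=> j _; rewrite subr0 leNgt; apply: Hn.
Qed.

End Spec.

Section Graph.
Variables (n : nat) (e : rel 'I_n).
Hypothesis HT : in_class_T e.

Lemma e_sym : symmetric e. Proof. by case: HT => [[[]]]. Qed.
Lemma e_irr : irreflexive e. Proof. by case: HT => [[[]]]. Qed.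
Lemma e_conn : connected_graph e. Proof. by case: HT => [[]]. Qed.
Lemma e_acyc : acyclic_graph e. Proof. by case: HT => [[]]. Qed.

Definition nb (p : 'I_n) : 'I_n := odflt p [pick j | e p j].

Lemma nbP p : pendant e p -> forall j, e p j = (j == nb p).
Proof.
rewrite /pendant /deg => /cards1P [x Hx].
have Ex j : e p j = (j == x) by rewrite -in_set1 -Hx inE.
have -> : nb p = x.
  rewrite /nb; case: pickP => [y|H] /=; first by rewrite Ex => /eqP.
  by have := H x; rewrite Ex eqxx.
exact: Ex.
Qed.

Lemma nb_edge p : pendant e p -> e p (nb p).
Proof. by move=> Hp; rewrite nbP // eqxx. Qed.

Lemma nb_of p q : pendant e p -> e q p -> q = nb p.
Proof. by move=> Hp; rewrite e_sym nbP // => /eqP. Qed.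

Lemma nb_internal p : pendant e p -> ~~ pendant e (nb p).
Proof.
move=> Hp; apply/negP => Hq.
have nbq : nb (nb p) = p by apply/esym/nb_of => //; exact: nb_edge.
have cl : forall s x, x \in [:: p; nb p] -> path e x s -> last x s \in [:: p; nb p].
  elim=> [//|y s IH] x Hx /= /andP [exy Hs]; apply: IH => //.
  move: Hx; rewrite !inE => /orP [] /eqP Ex; subst x.
    by move: exy; rewrite nbP // => ->; rewrite orbT.
  by move: exy; rewrite nbP // nbq => ->.
case: HT => _ [v Hv] _.
have /connectP [s Hs Hl] := e_conn p v.
have := cl s p; rewrite inE eqxx => /(_ isT Hs); rewrite -Hl !inE.
by case/orP => /eqP Ev; move: Hv; rewrite Ev ?Hp ?Hq.
Qed.

Lemma pend_pend p q : pendant e p -> pendant e q -> e p q = false.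
Proof.
move=> Hp Hq; apply/negP; rewrite nbP // => /eqP Eq.
by move: Hq; rewrite Eq => Hq; have := nb_internal Hp; rewrite Hq.
Qed.

Lemma internal_has_pendant q : ~~ pendant e q -> exists p, pendant e p && (nb p == q).
Proof.
case: HT => _ _ H /H [u /andP [equ Hu]]; exists u; rewrite Hu /=.
by apply/eqP/esym/nb_of.
Qed.

End Graph.

Section Branch.
Variables (n : nat) (e : rel 'I_n).
Hypothesis HT : in_class_T e.

Definition eqr (q : 'I_n) := [rel a b | e a b && (a != q) && (b != q)].

Lemma path_avoid q s a : path (eqr q) a s -> all (fun y => y != q) s.
Proof.
elim: s a => [//|y s IH] a /= /andP [/andP [/andP [_ _] yq] Hs].
by rewrite yq (IH y).
Qed.

Lemma branch_unique q r b : e q r -> connect (eqr q) r b -> e b q -> b = r.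
Proof.
move=> eqr_ /connectP [s Hs ->]; case: (shortenP Hs) => s' Hs' Hu _ ebq.
apply/eqP; apply: contraT => ne.
have rq : r != q by apply: contraTneq eqr_ => ->; rewrite (e_irr HT).
have av := path_avoid Hs'.
have Hac : acyclic_graph e := e_acyc HT.
have := Hac (q :: r :: s').
case: s' Hs' Hu av ebq ne => [|y s'] Hs' Hu av ebq ne; first by rewrite eqxx in ne.
move=> /(_ isT) H.
have U : uniq [:: q, r, y & s'].
  rewrite cons_uniq Hu andbT inE negb_or eq_sym rq /=.
  by apply/negP => qs; move/allP: av => /(_ q qs); rewrite eqxx.
have C : cycle e [:: q, r, y & s'].
  rewrite /cycle -cat1s -/(rcons _ _) rcons_path /= eqr_ /=.
  rewrite ebq andbT.
  by apply: (sub_path _ Hs') => a0 b0 /andP [/andP []].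
by move: (H U); rewrite C.
Qed.

End Branch.

Lemma rank_cols (F : fieldType) m k (M : 'M[F]_(m, k)) (S : {set 'I_k}) :
  (forall i j, j \notin S -> M i j = 0) -> (\rank M <= #|S|)%N.
Proof.
move=> H.
have -> : M = M *m diag_mx (\row_j ((j \in S)%:R : F)).
  apply/matrixP => i j; rewrite mul_mx_diag !mxE.
  by case: (boolP (j \in S)) => Hj; rewrite ?mulr1 // H // mulr0.
apply: leq_trans (mxrankM_maxr _ _) _; rewrite rank_diag -sum1_card.
rewrite [X in (_ <= X)%N]big_mkcond /=; apply: leq_sum => j _; rewrite mxE.
by case: (j \in S); rewrite ?oner_eq0 ?eqxx.
Qed.

Lemma sum_delta (F : nzRingType) m (G : 'I_m -> F) k :
  \sum_i G i * (i == k)%:R = G k.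
Proof.
rewrite (bigD1 k) //= eqxx mulr1 big1 ?addr0 // => i /negbTE ->; by rewrite mulr0.
Qed.

Lemma sum_delta_c (F : comNzRingType) m (G : 'I_m -> F) c k :
  \sum_i G i * (c * (i == k)%:R) = c * G k.
Proof.
under eq_bigr do rewrite mulrCA.
by rewrite -mulr_sumr sum_delta.
Qed.

Section Tree.
Variables (R : rcfType) (n : nat) (e : rel 'I_n) (w : 'I_n -> 'I_n -> R).
Hypotheses (HT : in_class_T e) (wsym : forall i j, w i j = w j i)
  (wpos : forall i j, e i j -> 0 < w i j).

Local Notation A := (wadj e w).

Lemma AE i j : A i j = if e i j then w i j else 0.
Proof. by rewrite mxE. Qed.

Lemma A_sym : A^T = A.
Proof. by apply/matrixP => i j; rewrite !mxE (e_sym HT) wsym. Qed.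

Lemma A_ge0 i j : 0 <= A i j.
Proof. by rewrite AE; case: ifP => // /wpos /ltW. Qed.

Lemma colA_pend (z : 'rV[R]_n) p : pendant e p ->
  (z *m A) ord0 p = z ord0 (nb e p) * w (nb e p) p.
Proof.
move=> Hp; rewrite mxE (bigD1 (nb e p)) //= AE (e_sym HT) nb_edge //.
rewrite big1 ?addr0 // => i Hi; rewrite AE (e_sym HT) nbP // (negbTE Hi) mulr0 //.
Qed.

Lemma mulBc (z : 'rV[R]_n) c j :
  (z *m (A - c%:M)) ord0 j = (z *m A) ord0 j - c * z ord0 j.
Proof. by rewrite mulmxBr mul_mx_scalar !mxE. Qed.

Definition Msum := \sum_i \sum_j A i j.
Definition Kc := n%:R * Msum + 1.
Definition kap (j : 'I_n) := Kc / w (nb e j) j.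
Definition CV : 'M[R]_n := \matrix_(i, j)
  (if pendant e j then (i == j)%:R - kap j * (i == nb e j)%:R else 0).

Lemma Msum_ge0 : 0 <= Msum.
Proof. by apply: sumr_ge0 => i _; apply: sumr_ge0 => j _; apply: A_ge0. Qed.

Lemma CV_rank : (\rank CV <= #|[set p | pendant e p]|)%N.
Proof. by apply: rank_cols => i j; rewrite inE mxE => /negbTE ->. Qed.

Lemma V_eq (z : 'rV[R]_n) : z *m CV = 0 ->
  forall p, pendant e p -> z ord0 p = kap p * z ord0 (nb e p).
Proof.
move=> H p Hp; have /eqP := congr1 (fun M : 'rV_n => M ord0 p) H.
rewrite !mxE; under eq_bigr do rewrite mxE Hp mulrBr.
rewrite sumrB sum_delta.
under eq_bigr do rewrite mulrCA.
by rewrite -mulr_sumr sum_delta subr_eq0 => /eqP.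
Qed.

Lemma w_nb p : pendant e p -> 0 < w (nb e p) p.
Proof. by move=> Hp; apply: wpos; rewrite (e_sym HT) nb_edge. Qed.

Lemma V_pos (z : 'rV[R]_n) : z *m CV = 0 -> z != 0 -> 0 < bf A z z.
Proof.
move=> HV z0.
have Vz := V_eq HV.
pose S := \sum_(q | ~~ pendant e q) z ord0 q ^+ 2.
pose T := \sum_(p | pendant e p) z ord0 (nb e p) ^+ 2.
have S_ge0 : 0 <= S by apply: sumr_ge0 => q _; apply: sqr_ge0.
have T_ge0 : 0 <= T by apply: sumr_ge0 => q _; apply: sqr_ge0.
have Sq q : ~~ pendant e q -> z ord0 q ^+ 2 <= S.
  move=> Hq; rewrite /S (bigD1 q) //= lerDl; apply: sumr_ge0 => *; apply: sqr_ge0.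
have Tq q : ~~ pendant e q -> z ord0 q ^+ 2 <= T.
  move=> /(internal_has_pendant HT) [p /andP [Hp /eqP <-]].
  rewrite /T (bigD1 p) //= lerDl; apply: sumr_ge0 => *; apply: sqr_ge0.
have ST : S <= n%:R * T.
  apply: le_trans (_ : \sum_(q : 'I_n) T <= _).
    rewrite [X in _ <= X](bigID (fun q => pendant e q)) /= -[S]add0r.
    apply: lerD; first by apply: sumr_ge0 => *.
    by apply: ler_sum => q Hq; apply: Tq.
  by rewrite sumr_const card_ord mulr_natl.
have Tpos : 0 < T.
  have [k zk] : exists k, z ord0 k != 0.
    apply/existsP; apply: contraR z0 => /existsPn H.
    by apply/eqP/matrixP => i j; rewrite ord1 mxE; apply/eqP/negPn/H.
  case: (boolP (pendant e k)) => Hk.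
    have zn : z ord0 (nb e k) != 0 by move: zk; rewrite Vz //; apply: contraNneq => ->; rewrite mulr0.
    apply: lt_le_trans (Tq _ (nb_internal HT Hk)); by rewrite lt_def sqr_ge0 sqrf_eq0 zn andbT.
  apply: lt_le_trans (Tq _ Hk); by rewrite lt_def sqr_ge0 sqrf_eq0 zk andbT.
suff : T <= bf A z z by apply: lt_le_trans.
rewrite bfE (bigID (fun i => pendant e i)) /=.
have P1 : \sum_(i | pendant e i) \sum_j z ord0 i * A i j * z ord0 j = Kc * T.
  rewrite /T mulr_sumr; apply: eq_bigr => i Hi.
  rewrite (bigD1 (nb e i)) //= big1 ?addr0 => [|j Hj]; last first.
    by rewrite AE nbP // (negbTE Hj) mulr0 mul0r.
  rewrite AE nb_edge // Vz // wsym /kap.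
  have := w_nb Hi; move: (w (nb e i) i) => x x0; field; exact: lt0r_neq0.
have P2 : - (Msum * S) <= \sum_(i | ~~ pendant e i) \sum_j z ord0 i * A i j * z ord0 j.
  apply: le_trans (_ : \sum_(i | ~~ pendant e i) \sum_j - (A i j * S) <= _).
    have -> : \sum_(i | ~~ pendant e i) \sum_j - (A i j * S) =
       - ((\sum_(i | ~~ pendant e i) \sum_j A i j) * S).
      rewrite mulr_suml -sumrN; apply: eq_bigr => i _; by rewrite mulr_suml -sumrN.
    rewrite lerN2; apply: ler_wpM2r => //.
    rewrite /Msum [X in _ <= X](bigID (fun i => pendant e i)) /= lerDr.
    by apply: sumr_ge0 => i _; apply: sumr_ge0 => j _; apply: A_ge0.
  apply: ler_sum => i Hi; apply: ler_sum => j _.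
  case: (boolP (pendant e j)) => Hj.
    case: (boolP (e i j)) => eij; last by rewrite AE (negbTE eij) mulr0 !mul0r oppr0.
    have Ei : i = nb e j by apply: nb_of; rewrite // (e_sym HT).
    rewrite (Vz _ Hj) -Ei.
    have k0 : 0 <= kap j by rewrite /kap divr_ge0 // ?(ltW (w_nb Hj)) // addr_ge0 ?ler01 // mulr_ge0 ?ler0n ?Msum_ge0.
    apply: le_trans (_ : 0 <= _).
      by rewrite oppr_le0 mulr_ge0 ?A_ge0 ?S_ge0.
    move: (A_ge0 i j) k0; move: (z ord0 i) (A i j) (kap j) => a c k c0 k0.
    have -> : a * c * (k * a) = c * k * (a ^+ 2) by ring.
    by apply: mulr_ge0; [apply: mulr_ge0 | apply: sqr_ge0].
  have := A_ge0 i j; have := Sq _ Hi; have := Sq _ Hj.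
  move: (z ord0 i) (z ord0 j) (A i j) => a b c hb ha c0.
  have hab : - S <= a * b by have := sqr_ge0 (a + b); nra.
  have -> : a * c * b = c * (a * b) by ring.
  by rewrite -mulrN; apply: ler_wpM2l.
rewrite P1.
have H3 : Msum * S <= Msum * (n%:R * T) by apply: ler_wpM2l => //; apply: Msum_ge0.
move: P2 H3; rewrite /Kc; move: (\sum_(i | _) _) (n%:R : R) => X m; lra.
Qed.

Definition inW (tau : R) (z : 'rV[R]_n) :=
  forall p, pendant e p -> (z *m (A - tau%:M)) ord0 p = 0.

Lemma inW_lin tau a u v : inW tau u -> inW tau v -> inW tau (a *: u + v).
Proof.
move=> Hu Hv p Hp; rewrite mulmxDl -scalemxAl.
have E : forall (M N : 'rV[R]_n), (M + N) ord0 p = M ord0 p + N ord0 p by move=> *; rewrite mxE.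
have E2 : forall (M : 'rV[R]_n), (a *: M) ord0 p = a * M ord0 p by move=> *; rewrite mxE.
rewrite E E2 (Hu p Hp) (Hv p Hp).
by rewrite mulr0 addr0.
Qed.

Lemma bf_col (M : 'M[R]_n) x u : bf M x u = \sum_j (x *m M) ord0 j * u ord0 j.
Proof. by rewrite /bf mxE; apply: eq_bigr => j _; rewrite [u^T _ _]mxE. Qed.

Lemma AB_sym tau : (A - tau%:M)^T = A - tau%:M.
Proof. by rewrite linearB /= A_sym tr_scalar_mx. Qed.

Lemma bfA_pend (u : 'rV[R]_n) : (forall j, ~~ pendant e j -> u ord0 j = 0) ->
  bf A u u = 0.
Proof.
move=> Hu; rewrite bf_col big1 // => j _.
case: (boolP (pendant e j)) => Hj; last by rewrite Hu // mulr0.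
by rewrite colA_pend // Hu ?mul0r ?mulr0 // nb_internal.
Qed.

Section U.
Variables (tau : R) (x : 'rV[R]_n) (q0 : 'I_n).
Hypotheses (tau0 : 0 < tau) (xW : inW tau x) (xneg : bf (A - tau%:M) x x < 0)
  (q0i : ~~ pendant e q0) (xq0 : x ord0 q0 != 0).

Definition CU : 'M[R]_n := \matrix_(i, j)
  (if ~~ pendant e j then x ord0 q0 * (i == j)%:R - x ord0 j * (i == q0)%:R else 0).

Lemma CU_rank : (\rank CU <= #|[set j | ~~ pendant e j] :\ q0|)%N.
Proof.
apply: rank_cols => i j; rewrite !inE negb_and negbK => /orP [/eqP ->|/negbTE Hj].
  by rewrite mxE q0i subrr.
by rewrite mxE Hj.
Qed.

Lemma U_eq (z : 'rV[R]_n) : z *m CU = 0 ->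
  forall j, ~~ pendant e j -> x ord0 q0 * z ord0 j = x ord0 j * z ord0 q0.
Proof.
move=> H j Hj; have /eqP := congr1 (fun M : 'rV_n => M ord0 j) H.
rewrite !mxE; under eq_bigr do rewrite mxE Hj mulrBr.
by rewrite sumrB !sum_delta_c subr_eq0 => /eqP.
Qed.

Lemma U_neg (z : 'rV[R]_n) : z *m CU = 0 -> z != 0 -> bf (A - tau%:M) z z < 0.
Proof.
move=> HU z0; have Uz := U_eq HU.
pose c := z ord0 q0 / x ord0 q0.
pose u := z - c *: x.
have uI j : ~~ pendant e j -> u ord0 j = 0.
  move=> Hj; rewrite !mxE /c; have := Uz j Hj.
  by move: (x ord0 q0) (x ord0 j) (z ord0 j) (z ord0 q0) xq0 => a b d f a0 E; field: E.
have zE : z = u + c *: x by rewrite /u subrK.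
have Hxu : bf (A - tau%:M) x u = 0.
  rewrite bf_col big1 // => j _; case: (boolP (pendant e j)) => Hj.
    by rewrite mulBc -mulBc xW // mul0r.
  by rewrite uI // mulr0.
have Hux : bf (A - tau%:M) u x = 0 by rewrite bf_sym ?AB_sym.
have Huu : bf (A - tau%:M) u u = - (tau * bf 1%:M u u).
  by rewrite bfBM bfA_pend // sub0r.
clearbody u c.
have -> : bf (A - tau%:M) z z = - (tau * bf 1%:M u u) + c ^+ 2 * bf (A - tau%:M) x x.
  rewrite zE bfDl !bfDr !bfZl !bfZr Hxu Hux Huu; ring.
case: (eqVneq u 0) => [u0|u0].
  have c0 : c != 0 by apply: contra_neq z0 => c0; rewrite zE u0 c0 scale0r addr0.
  rewrite u0 /bf mul0mx mul0mx mxE mulr0 oppr0 add0r.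
  by rewrite pmulr_rlt0 // lt_def sqr_ge0 sqrf_eq0 c0.
have := dot_gt0 u0; have := sqr_ge0 c.
move: (bf 1%:M u u) (c ^+ 2) (bf _ x x) xneg tau0 => a b d xn t0 b0 a0.
have : 0 <= b * - d by apply: mulr_ge0; rewrite // oppr_ge0 ltW.
nra.
Qed.

End U.

Lemma card_PI : (#|[set p | pendant e p]| + #|[set j | ~~ pendant e j]|)%N = n.
Proof.
have -> : [set j | ~~ pendant e j] = ~: [set p | pendant e p].
  by apply/setP => j; rewrite !inE.
by rewrite cardsC card_ord.
Qed.

Lemma PSD (rd : 'I_n -> R)
  (Hrank : forall c, \rank (A - c%:M) = (\sum_i (rd i != c : nat))%N) tau :
  0 < tau ->
  (forall j : 'I_(size (cs rd)), ~~ ((0 < nth 0 (cs rd) j) && (nth 0 (cs rd) j < tau))) ->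
  forall x, inW tau x -> 0 <= bf (A - tau%:M) x x.
Proof.
move=> t0 gap x xW; rewrite leNgt; apply/negP => xneg.
have [q0 /andP [q0i xq0]] : exists q0, ~~ pendant e q0 && (x ord0 q0 != 0).
  case: (pickP (fun q => ~~ pendant e q && (x ord0 q != 0))) => [q Hq|H]; first by exists q.
  have x0 : x = 0.
    have Hi q : ~~ pendant e q -> x ord0 q = 0.
      by move=> Hq; have := H q; rewrite Hq /= => /negbFE /eqP.
    apply/matrixP => i j; rewrite ord1 mxE.
    case: (boolP (pendant e j)) => Hj; last exact: Hi.
    have := xW j Hj; rewrite mulBc colA_pend // Hi ?nb_internal // mul0r sub0r.
    by move/eqP; rewrite oppr_eq0 mulf_eq0 (negbTE (lt0r_neq0 t0)) /= => /eqP.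
  by move: xneg; rewrite x0 /bf mul0mx mul0mx mxE ltxx.
have HU : forall z, (z <= kermx (CU x q0))%MS -> z != 0 -> bf (A - tau%:M) z z < 0.
  by move=> z /sub_kermxP; apply: U_neg.
have HV : forall z, (z <= kermx CV)%MS -> z != 0 -> 0 < bf A z z.
  by move=> z /sub_kermxP; apply: V_pos.
have := dim_bound A_sym Hrank gap HU HV.
rewrite !mxrank_ker.
have := CU_rank x q0i; have := CV_rank; have := card_PI.
rewrite [#|[set j | ~~ pendant e j]|](cardsD1 q0) inE q0i /=.
have := rank_leq_col (CU x q0); have := rank_leq_col CV.
lia.
Qed.

Section Eig.
Variables (tau : R).
Hypotheses (t0 : 0 < tau)
  (psd : forall z, inW tau z -> 0 <= bf (A - tau%:M) z z).

Lemma psd_orth u v : inW tau u -> inW tau v ->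
  bf (A - tau%:M) u u = 0 -> bf (A - tau%:M) u v = 0.
Proof.
move=> Hu Hv H0.
have g0 := psd Hv.
have sy : bf (A - tau%:M) v u = bf (A - tau%:M) u v by rewrite bf_sym ?AB_sym.
apply/eqP; apply: contraT => b0.
pose a := - (bf (A - tau%:M) v v + 1) / (2 * bf (A - tau%:M) u v).
have := psd (inW_lin a Hu Hv).
rewrite bfDl !bfDr !bfZl !bfZr H0 sy /a.
move: (bf _ u v) (bf _ v v) b0 g0 => b c b0 g0.
have -> : - (c + 1) / (2 * b) * (- (c + 1) / (2 * b) * 0) + - (c + 1) / (2 * b) * b +
  (- (c + 1) / (2 * b) * b + c) = -1.
  by field.
by rewrite ler0N1.
Qed.

Lemma eig_inW (x : 'rV[R]_n) : x *m A = tau *: x -> inW tau x.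
Proof. by move=> H p _; rewrite mulBc H mxE subrr. Qed.

Lemma col_eig (x : 'rV[R]_n) a : x *m A = tau *: x -> (x *m A) ord0 a = tau * x ord0 a.
Proof. by move=> H; rewrite H mxE. Qed.

Lemma conn_avoid q r b : connect (eqr e q) r b -> r != q -> b != q.
Proof.
move=> /connectP [s Hs ->] rq; case: (lastP s) Hs => [//|s' y] Hs.
rewrite last_rcons; have := path_avoid Hs; rewrite all_rcons => /andP [] //.
Qed.

Lemma zero_prop (x : 'rV[R]_n) : x *m A = tau *: x ->
  forall u v, e u v -> x ord0 u = 0 -> x ord0 v = 0.
Proof.
move=> Hx u v euv xu.
have tne : tau != 0 by rewrite lt0r_neq0.
case: (boolP (pendant e u)) => Hu.
  have vE : v = nb e u by apply/eqP; rewrite -nbP.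
  have := col_eig u Hx; rewrite colA_pend // xu mulr0 -vE.
  have wvu : w v u != 0 by apply: lt0r_neq0; apply: wpos; rewrite (e_sym HT).
  by move/eqP; rewrite mulf_eq0 (negbTE wvu) orbF => /eqP.
case: (boolP (pendant e v)) => Hv.
  have uE : u = nb e v by apply: nb_of.
  have := col_eig v Hx; rewrite colA_pend // -uE xu mul0r.
  by move/eqP; rewrite eq_sym mulf_eq0 (negbTE tne) /= => /eqP.
pose S := [set b | connect (eqr e u) v b].
have vu : v != u by apply: contraTneq euv => ->; rewrite (e_irr HT).
have uS : u \notin S by rewrite inE; apply/negP => /conn_avoid /(_ vu); rewrite eqxx.
have vS : v \in S by rewrite inE connect0.
have Snu b : b \in S -> b != u by rewrite inE => /conn_avoid; apply.
pose xS : 'rV[R]_n := \row_b (if b \in S then x ord0 b else 0).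
pose e' : 'rV[R]_n := \row_b (if b == u then 1
   else if e u b && pendant e b then w u b / tau else 0).
have yE a : (xS *m (A - tau%:M)) ord0 a = if a == u then x ord0 v * w v u else 0.
  rewrite mulBc mxE.
  case: (boolP (a \in S)) => aS.
    have au := Snu _ aS; rewrite (negbTE au).
    have -> : \sum_b xS ord0 b * A b a = \sum_b x ord0 b * A b a.
      apply: eq_bigr => b _; rewrite !mxE.
      case: (boolP (e b a)) => eba; last by rewrite !mulr0.
      case: (boolP (b \in S)) => bS //.
      case: (eqVneq b u) => [->|bu]; first by rewrite xu.
      exfalso; move: bS; rewrite inE; apply/negP/negPn.
      move: aS; rewrite inE => /connect_trans; apply; apply: connect1.
      by rewrite /= (e_sym HT) eba au bu.
    have := col_eig a Hx; rewrite mxE => ->.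
    by rewrite mxE aS subrr.
  rewrite mxE (negbTE aS) mulr0 subr0.
  case: (eqVneq a u) => [->|au].
    rewrite (bigD1 v) //= !mxE vS (e_sym HT) euv big1 ?addr0 // => b bv.
    rewrite !mxE; case: (boolP (b \in S)) => bS; last by rewrite mul0r.
    case: (boolP (e b u)) => ebu; last by rewrite mulr0.
    by exfalso; move: bS; rewrite inE => /(branch_unique HT euv) /(_ ebu) /eqP; rewrite (negbTE bv).
  rewrite big1 // => b _; rewrite !mxE.
  case: (boolP (b \in S)) => bS; last by rewrite mul0r.
  case: (boolP (e b a)) => eba; last by rewrite mulr0.
  have bu := Snu _ bS.
  exfalso; move: aS; rewrite inE; apply/negP/negPn.
  move: bS; rewrite inE => /connect_trans; apply; apply: connect1.
  by rewrite /= eba bu au.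
have xSW : inW tau xS.
  move=> p Hp; rewrite yE; case: (eqVneq p u) => [pu|//].
  by move: Hu; rewrite -pu Hp.
have e'W : inW tau e'.
  move=> p Hp; rewrite mulBc colA_pend // !mxE.
  have pu : (p == u) = false by apply/negbTE; apply: contraTneq Hp => ->.
  rewrite pu.
  case: (eqVneq (nb e p) u) => [nbu|nbu].
    rewrite nbu.
    have eup : e u p by rewrite (e_sym HT) nbP // nbu eqxx.
    by rewrite eup Hp /= mul1r mulrC divfK ?subrr // lt0r_neq0.
  rewrite (negbTE (nb_internal HT Hp)) andbF mul0r.
  have -> : e u p = false.
    by apply/negbTE; apply: contra nbu => eup; apply/eqP/esym/nb_of.
  by rewrite mulr0 subrr.
have H0 : bf (A - tau%:M) xS xS = 0.
  rewrite bf_col big1 // => a _; rewrite yE; case: (eqVneq a u) => [->|_].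
    by rewrite mxE (negbTE uS) mulr0.
  by rewrite mul0r.
have := psd_orth xSW e'W H0.
rewrite bf_col (bigD1 u) //= big1 ?addr0 => [|a au]; last by rewrite yE (negbTE au) mul0r.
rewrite yE eqxx mxE eqxx mulr1 => /eqP; rewrite mulf_eq0.
have /negbTE -> : w v u != 0 by apply: lt0r_neq0; apply: wpos; rewrite (e_sym HT).
by rewrite orbF => /eqP.
Qed.

Lemma nowhere_zero (x : 'rV[R]_n) : x *m A = tau *: x -> x != 0 ->
  forall i, x ord0 i != 0.
Proof.
move=> Hx x0 i; apply: contra x0 => /eqP xi.
apply/eqP/matrixP => a j; rewrite ord1 mxE.
have /connectP [s Hs ->] := e_conn HT i j.
elim: s i xi Hs => [//|y s IH] i xi /= /andP [eiy Hs].
by apply: (IH y) => //; apply: (zero_prop Hx eiy).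
Qed.

Lemma eig_rank1 : eigenvalue A tau -> \rank (eigenspace A tau) = 1%N.
Proof.
move=> Hev; have /eigenvalueP [x0 Hx0 x00] := Hev.
have [i0 _] : exists i0 : 'I_n, true by case: HT => _ [v _] _; exists v.
apply/eqP; rewrite eqn_leq; apply/andP; split; last first.
  by rewrite lt0n mxrank_eq0.
apply: leq_trans (mxrankS (_ : eigenspace A tau <= x0)%MS) (rank_leq_row x0).
apply/row_subP => k; set y := row k (eigenspace A tau).
have Hy : y *m A = tau *: y by apply/eigenspaceP; apply: row_sub.
clearbody y.
pose c := y ord0 i0 / x0 ord0 i0.
have xi0 : x0 ord0 i0 != 0 by apply: nowhere_zero.
have : y - c *: x0 = 0.
  apply/eqP; apply: contraT => z0.
  have Hz : (y - c *: x0) *m A = tau *: (y - c *: x0).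
    by rewrite mulmxBl -scalemxAl Hy Hx0 scalerBr !scalerA mulrC.
  by have := nowhere_zero Hz z0 i0; rewrite !mxE /c divfK // subrr eqxx.
by move/eqP; rewrite subr_eq0 => /eqP ->; apply: scalemx_sub.
Qed.

End Eig.

End Tree.

Lemma min_pos (R : realDomainType) (s : seq R) : has (fun x => 0 < x) s ->
  exists2 t, t \in s & (0 < t) && all (fun y => (0 < y) ==> (t <= y)) s.
Proof.
elim: s => [//|a s IH] /= /orP [a0|Hs].
  case: (boolP (has (fun x => 0 < x) s)) => [/IH [t ts /andP [t0 Ht]]|Hn].
    case: (leP a t) => hat.
      exists a; rewrite ?inE ?eqxx // a0 lexx /=.
      apply/allP => y ys; apply/implyP => y0.
      by apply: le_trans hat _; move/allP: Ht => /(_ y ys) /implyP; apply.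
    exists t; first by rewrite inE ts orbT.
    by rewrite /= t0 Ht andbT; apply/implyP => _; exact: ltW.
  exists a; rewrite ?inE ?eqxx // a0 lexx /=.
  apply/allP => y ys; apply/implyP => y0; exfalso; move/hasPn: Hn => /(_ y ys).
  by rewrite y0.
have [t ts /andP [t0 Ht]] := IH Hs.
case: (boolP (0 < a)) => a0.
  case: (leP a t) => hat.
    exists a; rewrite ?inE ?eqxx // a0 lexx /=.
    apply/allP => y ys; apply/implyP => y0.
    by apply: le_trans hat _; move/allP: Ht => /(_ y ys) /implyP; apply.
  exists t; first by rewrite inE ts orbT.
  by rewrite /= t0 Ht andbT (ltW hat).
exists t; first by rewrite inE ts orbT.
by rewrite /= t0 Ht.
Qed.

Unset Implicit Arguments.

Theorem corollary3p11 (R : rcfType) (n : nat) (e : rel 'I_n)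
    (w : 'I_n -> 'I_n -> R) :
  in_class_T e ->
  (forall i j, w i j = w j i) ->
  (forall i j, e i j -> 0 < w i j) ->
  let A := wadj e w in
  exists tau : R,
    [/\ 0 < tau, eigenvalue A tau,
        (forall mu : R, 0 < mu -> eigenvalue A mu -> tau <= mu),
        mup tau (char_poly A) = 1%N &
        exists v : 'rV[R]_n, v *m A = tau *: v /\ forall i, v 0 i != 0].
Proof.
move=> HT wsym wpos A.
have Asym : A^T = A := A_sym HT wsym.
have [rd [Hchar Hrank]] := real_spectral Asym.
have HV : forall z, (z <= kermx (CV e w))%MS -> z != 0 -> 0 < bf A z z.
  by move=> z /sub_kermxP; apply: V_pos.
have V0 : kermx (CV e w) != 0.
  rewrite -mxrank_eq0 mxrank_ker.
  have := CV_rank e w; have := card_PI e; have := rank_leq_col (CV e w).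
  case: HT => _ [v Hv] _.
  have : (0 < #|[set j | ~~ pendant e j]|)%N by apply/card_gt0P; exists v; rewrite inE.
  lia.
have [j0 Hj0] := ex_pos Asym Hrank HV V0.
have hp : has (fun x => 0 < x) (cs rd).
  by apply/hasP; exists (nth 0 (cs rd) j0) => //; apply: mem_nth.
have [tau taucs /andP [t0 tmin]] := min_pos hp.
have csE c : c \in cs rd -> eigenvalue A c.
  rewrite mem_undup => /mapP [i _ ->]; rewrite (eigenvalue_rd Hrank).
  by apply/existsP; exists i.
have Ecs c : eigenvalue A c -> c \in cs rd.
  rewrite (eigenvalue_rd Hrank) => /existsP [i /eqP <-].
  by rewrite mem_undup map_f // mem_enum.
have gap : forall j : 'I_(size (cs rd)), ~~ ((0 < nth 0 (cs rd) j) && (nth 0 (cs rd) j < tau)).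
  move=> j; apply/negP => /andP [c0 ct].
  have : nth 0 (cs rd) j \in cs rd by apply: mem_nth.
  move/allP: tmin => H /H /implyP /(_ c0); by rewrite leNgt ct.
have psd := PSD HT wsym wpos Hrank t0 gap.
have Htau := csE _ taucs.
exists tau; split => //.
- move=> mu mu0 /Ecs mucs; by move/allP: tmin => /(_ mu mucs) /implyP; apply.
- by rewrite (mup_rd Hchar) -(rank_eigen Hrank) (eig_rank1 HT wsym wpos t0 psd Htau).
- have /eigenvalueP [x Hx x0] := Htau.
  exists x; split => // i; exact: (nowhere_zero HT wsym wpos t0 psd Hx x0).
Qed.
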